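(* Let $G$ be a convex, twice differentiable real-valued function on the space of symmetric $N\times N$ matrices (in particular on the cone of positive semidefinite matrices), with compact level sets on the positive semidefinite cone. For $M\ge1$ define $H:\mathbb{R}^{N\times M}\to\mathbb{R}$ by $H(U)=G(UU^\top)$. If $H$ has a local minimum at a matrix $U\in\mathbb{R}^{N\times M}$ that is rank-deficient (i.e., $\operatorname{rank}U<M$), then $UU^\top$ is a global minimizer of $G$ over the positive semidefinite $N\times N$ matrices. *)

(* Defs.v *)
From Stdlib Require Import Reals.
From mathcomp Require Import all_boot.

Set Implicit Arguments.
Unset Strict Implicit.

Local Open Scope R_scope.

Definition Mat (n m : nat) := 'I_n -> 'I_m -> R.

Definition rsum (n : nat) (f : 'I_n -> R) : R := foldr (fun i acc => f i + acc) 0 (enum 'I_n).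

Definition madd n m (X Y : Mat n m) : Mat n m := fun i j => X i j + Y i j.
Definition mscale n m (a : R) (X : Mat n m) : Mat n m := fun i j => a * X i j.
Definition msub n m (X Y : Mat n m) : Mat n m := fun i j => X i j - Y i j.

(* entrywise l1 norm (all norms are equivalent in finite dimension) *)
Definition mnorm n m (X : Mat n m) : R :=
  rsum (fun i => rsum (fun j => Rabs (X i j))).

Definition gram n m (U : Mat n m) : Mat n n :=
  fun i j => rsum (fun k => U i k * U j k).

Definition symmetric n (X : Mat n n) : Prop := forall i j, X i j = X j i.

Definition psd n (X : Mat n n) : Prop :=
  symmetric X /\
  forall v : 'I_n -> R, 0 <= rsum (fun i => rsum (fun j => v i * X i j * v j)).

Definition convex_on_sym n (G : Mat n n -> R) : Prop :=
  forall X Y, symmetric X -> symmetric Y -> forall t, 0 <= t <= 1 ->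
    G (madd (mscale t X) (mscale (1 - t) Y)) <= t * G X + (1 - t) * G Y.

Definition linear_on_sym n (L : Mat n n -> R) : Prop :=
  forall a b H K, symmetric H -> symmetric K ->
    L (madd (mscale a H) (mscale b K)) = a * L H + b * L K.

Definition bilinear_on_sym n (B : Mat n n -> Mat n n -> R) : Prop :=
  (forall K, symmetric K -> linear_on_sym (fun H => B H K)) /\
  (forall H, symmetric H -> linear_on_sym (fun K => B H K)).

(* G twice (Frechet) differentiable on the space of symmetric matrices:
   DG X is the first derivative at X (a linear form on Sym_n), D2G X the
   second derivative at X (a bilinear form on Sym_n), i.e. the Frechet
   derivative of X |-> DG X w.r.t. the operator norm. *)
Definition twice_differentiable_on_sym n (G : Mat n n -> R) : Prop :=
  exists (DG : Mat n n -> Mat n n -> R) (D2G : Mat n n -> Mat n n -> Mat n n -> R),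
  forall X, symmetric X ->
    linear_on_sym (DG X) /\ bilinear_on_sym (D2G X) /\
    (forall eps, 0 < eps -> exists delta, 0 < delta /\
       forall H, symmetric H -> mnorm H < delta ->
         Rabs (G (madd X H) - G X - DG X H) <= eps * mnorm H) /\
    (forall eps, 0 < eps -> exists delta, 0 < delta /\
       forall H, symmetric H -> mnorm H < delta ->
       forall K, symmetric K ->
         Rabs (DG (madd X H) K - DG X K - D2G X H K) <= eps * mnorm H * mnorm K).

Definition compact_set n m (A : Mat n m -> Prop) : Prop :=
  forall u : nat -> Mat n m, (forall k, A (u k)) ->
    exists phi : nat -> nat, (forall k, (phi k < phi k.+1)%nat) /\
    exists L, A L /\ forall i j, Un_cv (fun k => u (phi k) i j) (L i j).

Definition compact_level_sets_psd n (G : Mat n n -> R) : Prop :=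
  forall c : R, compact_set (fun X => psd X /\ G X <= c).

Definition local_min n m (H : Mat n m -> R) (U : Mat n m) : Prop :=
  exists delta, 0 < delta /\
    forall V, mnorm (msub V U) < delta -> H U <= H V.

(* rank U < m : the m columns of U are linearly dependent *)
Definition rank_deficient n m (U : Mat n m) : Prop :=
  exists z : 'I_m -> R, (exists k, z k <> 0) /\
    forall i, rsum (fun k => U i k * z k) = 0.

Definition global_min_psd n (G : Mat n n -> R) (X : Mat n n) : Prop :=
  psd X /\ forall Y, psd Y -> G X <= G Y.

(* Main.v *)
Require Import Defs.
From Stdlib Require Import Reals.
From mathcomp Require Import all_boot.
From HB Require Import structures.
From Stdlib Require Import Lra FunctionalExtensionality.
Local Open Scope R_scope.
Set Implicit Arguments.
Unset Strict Implicit.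
Local Notation sym := Defs.symmetric.
Ltac ext2 := apply functional_extensionality => ?; apply functional_extensionality => ?.
HB.instance Definition _ := Monoid.isComLaw.Build R 0 Rplus (fun x y z => esym (Rplus_assoc x y z)) Rplus_comm Rplus_0_l.
Lemma rsumE n (f : 'I_n -> R) : rsum f = \big[Rplus/0]_(i < n) f i.
Proof.
rewrite /rsum -big_enum /=.
elim: (enum 'I_n) => [|a s IH]; first by rewrite big_nil.
by rewrite big_cons /= IH.
Qed.
Lemma rsum_ext n (f g : 'I_n -> R) : (forall i, f i = g i) -> rsum f = rsum g.
Proof. by move=> h; rewrite !rsumE; apply: eq_bigr => i _; apply: h. Qed.
Lemma rsum_add n (f g : 'I_n -> R) : rsum (fun i => f i + g i) = rsum f + rsum g.
Proof. by rewrite !rsumE big_split. Qed.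
Lemma rsum_scal n a (f : 'I_n -> R) : rsum (fun i => a * f i) = a * rsum f.
Proof. rewrite !rsumE; elim/big_rec2: _ => [|i y1 y2 _ ->]; ring. Qed.
Lemma rsum_0 n : rsum (fun _ : 'I_n => 0) = 0.
Proof. by rewrite rsumE big1. Qed.
Lemma rsum_ge0 n (f : 'I_n -> R) : (forall i, 0 <= f i) -> 0 <= rsum f.
Proof. move=> h; rewrite rsumE; elim/big_rec: _ => [|i y _ hy]; [lra|]. by have := h i; lra. Qed.
Lemma rsum_swap n m (f : 'I_n -> 'I_m -> R) :
  rsum (fun i => rsum (fun j => f i j)) = rsum (fun j => rsum (fun i => f i j)).
Proof.
rewrite rsumE (eq_bigr (fun i => \big[Rplus/0]_(j < m) f i j)); last by move=> i _; rewrite rsumE.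
rewrite exchange_big rsumE; apply: eq_bigr => j _; by rewrite rsumE.
Qed.
Lemma rsum_delta n (k : 'I_n) c (f : 'I_n -> R) :
  rsum (fun i => (if i == k then c else 0) * f i) = c * f k.
Proof.
rewrite rsumE (bigD1 k) //= eqxx big1 => [|i /negbTE ->]; ring.
Qed.
Lemma rsum_delta' n (k : 'I_n) c (f : 'I_n -> R) :
  rsum (fun i => f i * (if i == k then c else 0)) = f k * c.
Proof.
rewrite (@rsum_ext _ _ (fun i => (if i == k then c else 0) * f i)); last by move=> i; ring.
rewrite rsum_delta; ring.
Qed.


Lemma lin_scale n (L : Mat n n -> R) : linear_on_sym L -> forall a H,
  sym H -> L (mscale a H) = a * L H.
Proof.
move=> hL a H sH.
have -> : mscale a H = madd (mscale a H) (mscale 0 H) by ext2; rewrite /madd /mscale; ring.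
rewrite hL //; ring.
Qed.

Lemma lin_add n (L : Mat n n -> R) : linear_on_sym L -> forall H K,
  sym H -> sym K -> L (madd H K) = L H + L K.
Proof.
move=> hL H K sH sK.
have -> : madd H K = madd (mscale 1 H) (mscale 1 K) by ext2; rewrite /madd /mscale; ring.
rewrite hL //; ring.
Qed.

Lemma mnorm_ge0 n m (X : Mat n m) : 0 <= mnorm X.
Proof. apply: rsum_ge0 => i; apply: rsum_ge0 => j; apply Rabs_pos. Qed.

Lemma mnorm_scale n m a (X : Mat n m) : mnorm (mscale a X) = Rabs a * mnorm X.
Proof.
rewrite /mnorm /mscale -rsum_scal; apply: rsum_ext => i.
rewrite -rsum_scal; apply: rsum_ext => j; apply Rabs_mult.
Qed.

Definition qf n (Y : Mat n n) (w : 'I_n -> R) :=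
  rsum (fun i => rsum (fun j => w i * Y i j * w j)).

Lemma qf_expand n (Y : Mat n n) (u : 'I_n -> R) (k : 'I_n) (c : R) : sym Y ->
  qf Y (fun i => u i + (if i == k then c else 0)) =
  qf Y u + 2 * c * rsum (fun j => Y k j * u j) + c * c * Y k k.
Proof.
move=> sY; rewrite /qf.
have inner : forall i, rsum (fun j => (u i + (if i == k then c else 0)) * Y i j * (u j + (if j == k then c else 0))) =
   rsum (fun j => u i * Y i j * u j) + (if i == k then c else 0) * rsum (fun j => Y i j * u j)
   + c * (u i * Y i k + (if i == k then c else 0) * Y i k).
  move=> i.
  rewrite (@rsum_ext _ _ (fun j => (u i * Y i j * u j + (if i == k then c else 0) * (Y i j * u j)) +
     (if j == k then c else 0) * (u i * Y i j + (if i == k then c else 0) * Y i j))); last by move=> j; ring.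
  by rewrite rsum_add rsum_delta rsum_add rsum_scal.
rewrite (rsum_ext inner) rsum_add rsum_add rsum_delta.
rewrite (@rsum_ext _ (fun i => c * (u i * Y i k + (if i == k then c else 0) * Y i k))
   (fun i => c * (Y k i * u i) + (if i == k then c else 0) * (c * Y i k))); last first.
  by move=> i; rewrite (sY i k); ring.
rewrite rsum_add rsum_delta rsum_scal; ring.
Qed.

Lemma qf_zero n (Y : Mat n n) : qf Y (fun _ => 0) = 0.
Proof.
rewrite /qf (@rsum_ext _ _ (fun _ => 0)) ?rsum_0 // => i.
rewrite (@rsum_ext _ _ (fun _ => 0)) ?rsum_0 // => j; ring.
Qed.

Lemma qf_e n (Y : Mat n n) (k : 'I_n) : sym Y ->
  qf Y (fun i => if i == k then 1 else 0) = Y k k.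
Proof.
move=> sY.
have := qf_expand (fun _ => 0) k 1 sY; rewrite qf_zero.
rewrite (@rsum_ext _ _ (fun _ => 0)) ?rsum_0; last by move=> j; ring.
have -> : (fun i : 'I_n => 0 + (if i == k then 1 else 0)) = (fun i => if i == k then 1 else 0).
  by apply functional_extensionality => i; ring.
move=> ->; ring.
Qed.

Lemma psd_qf n (Y : Mat n n) : psd Y -> forall w, 0 <= qf Y w.
Proof. by case=> _ h w; apply: h. Qed.

Lemma psd_diag n (Y : Mat n n) k : psd Y -> 0 <= Y k k.
Proof. move=> hY; rewrite -(qf_e k hY.1); exact: psd_qf. Qed.

Lemma psd_zero_row n (Y : Mat n n) k : psd Y -> Y k k = 0 -> forall j, Y k j = 0.
Proof.
move=> hY h0 j.
have sY := hY.1.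
case: (Req_dec (Y k j) 0) => // hne.
set t := - (Y j j + 1) / (2 * Y k j).
have := psd_qf hY (fun i => (if i == j then 1 else 0) + (if i == k then t else 0)).
rewrite qf_expand // qf_e // h0.
rewrite (@rsum_delta' _ j 1 (fun l => Y k l)).
have : t * Y k j = - (Y j j + 1) / 2 by rewrite /t; field.
nra.
Qed.

Lemma psd_rank1 n (L : Mat n n -> R) : linear_on_sym L ->
  (forall v : 'I_n -> R, 0 <= L (fun i j => v i * v j)) -> forall Y, psd Y -> 0 <= L Y.
Proof.
move=> hL hv.
suff: forall d k, (k + d = n)%N -> forall Y, psd Y ->
   (forall i j : 'I_n, (i < k)%N -> Y i j = 0) -> 0 <= L Y.
  by move=> h Y hY; apply: (h n 0%N) => // i j.
elim=> [|d IH] k hk Y hY hz.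
  have sY := hY.1.
  have -> : Y = mscale 0 Y.
    apply functional_extensionality => i; apply functional_extensionality => j.
    rewrite /mscale hz; [ring|]. by have := ltn_ord i; rewrite -[in X in (_ < X)%N]hk addn0.
  rewrite lin_scale //; lra.
have sY := hY.1.
have kn : (k < n)%N by rewrite -hk addnS ltnS leq_addr.
set kk := Ordinal kn.
have hk1 : (k.+1 + d = n)%N by rewrite addSnnS.
have ha := psd_diag kk hY.
case: (Rle_lt_or_eq_dec _ _ ha) => [apos|azero]; last first.
  apply: (IH k.+1 hk1 Y hY) => i j hi.
  case: (ltnP i k) => hik; first exact: hz.
  have -> : i = kk by apply: val_inj => /=; apply/eqP; rewrite eqn_leq hik -ltnS hi.
  exact: psd_zero_row.
set a := Y kk kk.
have apos2 : 0 < a := apos.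
set v := fun i => Y i kk / sqrt a.
set Y' : Mat n n := fun i j => Y i j - Y i kk * Y j kk / a.
have sqa : sqrt a * sqrt a = a by apply: sqrt_sqrt; lra.
have sqn : sqrt a <> 0 by apply: Rgt_not_eq; apply: sqrt_lt_R0.
have sY' : sym Y' by move=> i j; rewrite /Y' /= (sY i j); field; lra.
have sP : sym (fun i j => v i * v j) by move=> i j; ring.
have -> : Y = madd (mscale 1 Y') (mscale 1 (fun i j => v i * v j)).
  ext2; rewrite /madd /mscale /Y' /v.
  have -> : forall x y, x / sqrt a * (y / sqrt a) = x * y / (sqrt a * sqrt a) by move=> x y; field.
  rewrite sqa; field; lra.
rewrite hL //.
have := hv v.
suff: 0 <= L Y' by lra.
apply: (IH k.+1 hk1 Y') => [|i j hi]; last first.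
  rewrite /Y' /=.
  case: (ltnP i k) => hik; first by rewrite (hz i j hik) (hz i kk hik) /Rdiv; ring.
  have -> : i = kk by apply: val_inj => /=; apply/eqP; rewrite eqn_leq hik -ltnS hi.
  rewrite (sY j kk) -/a; field; lra.
split=> // w.
change (0 <= qf Y' w).
have e1 : qf Y' w = qf Y w - rsum (fun j => Y kk j * w j) * rsum (fun j => Y kk j * w j) / a.
  rewrite /qf /Y'.
  rewrite (@rsum_ext _ _ (fun i => rsum (fun j => w i * Y i j * w j) +
       (- (w i * Y i kk / a)) * rsum (fun j => Y kk j * w j))); last first.
    move=> i; rewrite -rsum_scal -rsum_add; apply: rsum_ext => j; rewrite (sY j kk); field; lra.
  rewrite rsum_add.
  rewrite (@rsum_ext _ (fun i => (- (w i * Y i kk / a)) * rsum (fun j => Y kk j * w j)) (fun i => (- (rsum (fun j => Y kk j * w j) / a)) * (Y kk i * w i))); last first.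
    by move=> i; rewrite (sY i kk); field; lra.
  rewrite rsum_scal; field; lra.
rewrite e1.
set b := rsum (fun j => Y kk j * w j).
have := psd_qf hY (fun i => w i + (if i == kk then - b / a else 0)).
rewrite qf_expand // -/b -/a.
have : - b / a * (- b / a) * a = b * b / a by field; lra.
have : 2 * (- b / a) * b = - 2 * (b * b / a) by field; lra.
lra.
Qed.

Lemma abs_bounds x y : Rabs x <= y -> - y <= x <= y.
Proof. move=> h; have := Rle_abs x; have := Rle_abs (- x); rewrite Rabs_Ropp; lra. Qed.

Lemma le_div t x y : 0 < y -> t <= x / y -> t * y <= x.
Proof.
move=> hy h; have := Rmult_le_compat_r y _ _ (Rlt_le _ _ hy) h.
have -> : x / y * y = x by field; lra.
done.
Qed.

Lemma pick3 a b c : 0 < a -> 0 < b -> 0 < c -> exists t, 0 < t /\ t <= a /\ t <= b /\ t <= c.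
Proof.
move=> ha hb hc; exists (Rmin a (Rmin b c)); split; first by repeat apply: Rmin_pos.
split; first exact: Rmin_l.
split; [apply: Rle_trans (Rmin_r _ _) (Rmin_l _ _) | apply: Rle_trans (Rmin_r _ _) (Rmin_r _ _)].
Qed.

Lemma rsum_ge_term n (f : 'I_n -> R) k : (forall i, 0 <= f i) -> f k <= rsum f.
Proof.
move=> h; rewrite rsumE (bigD1 k) //=.
rewrite -{1}(Rplus_0_r (f k)); apply: Rplus_le_compat_l.
elim/big_rec: _ => [|i y _ hy]; [lra|]. by have := h i; lra.
Qed.

Lemma gram_sym n m (U : Mat n m) : sym (gram U).
Proof. by move=> i j; rewrite /gram; apply: rsum_ext => k; ring. Qed.

Lemma gram_psd n m (U : Mat n m) : psd (gram U).
Proof.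
split; first exact: gram_sym.
move=> v; change (0 <= qf (gram U) v).
set S := fun k => rsum (fun i => v i * U i k).
suff -> : qf (gram U) v = rsum (fun k => S k * S k).
  by apply: rsum_ge0 => k; apply: Rle_0_sqr.
rewrite /qf.
transitivity (rsum (fun i => rsum (fun j => rsum (fun k => (v i * U i k) * (v j * U j k))))).
  apply: rsum_ext => i; apply: rsum_ext => j; rewrite /gram.
  transitivity (v i * v j * rsum (fun k => U i k * U j k)); first ring.
  rewrite -rsum_scal; apply: rsum_ext => k; ring.
transitivity (rsum (fun i => rsum (fun k => rsum (fun j => (v i * U i k) * (v j * U j k))))).
  by apply: rsum_ext => i; apply: rsum_swap.
rewrite rsum_swap; apply: rsum_ext => k.
transitivity (rsum (fun i => S k * (v i * U i k))).
  by apply: rsum_ext => i; rewrite rsum_scal /S; ring.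
by rewrite rsum_scal.
Qed.

Lemma key n (G : Mat n n -> R) (A : Mat n n -> R) (X H : Mat n n) :
  sym H -> linear_on_sym A ->
  (forall eps, 0 < eps -> exists delta, 0 < delta /\ forall H, sym H -> mnorm H < delta ->
      Rabs (G (madd X H) - G X - A H) <= eps * mnorm H) ->
  (forall d, 0 < d -> exists s, 0 < s < d /\ G X <= G (madd X (mscale s H))) ->
  0 <= A H.
Proof.
move=> sH lA hd hs; apply: Rnot_lt_le => hneg.
have hm := mnorm_ge0 H.
set eps := - A H / (2 * (mnorm H + 1)).
have eps0 : 0 < eps by apply: Rdiv_lt_0_compat; lra.
have e1 : eps * (2 * (mnorm H + 1)) = - A H by rewrite /eps; field; lra.
case: (hd eps eps0) => d [d0 hd'].
case: (hs (d / (mnorm H + 1))) => [|s [[s0 sd] hG]]; first by apply: Rdiv_lt_0_compat; lra.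
have sd' := le_div (ltac:(lra) : 0 < mnorm H + 1) (Rlt_le _ _ sd).
have sH' : sym (mscale s H) by move=> i j; rewrite /mscale sH.
have nm : mnorm (mscale s H) = s * mnorm H by rewrite mnorm_scale Rabs_pos_eq; lra.
have := hd' _ sH'; rewrite nm lin_scale //.
move=> /(_ ltac:(nra)) /abs_bounds.
nra.
Qed.

Unset Implicit Arguments.
Set Strict Implicit.
Theorem proposition4 (N M : nat) (G : Mat N N -> R)
  (hM : (0 < M)%nat)
  (hconv : convex_on_sym G)
  (hdiff : twice_differentiable_on_sym G)
  (hcomp : compact_level_sets_psd G)
  (U : Mat N M)
  (hloc : local_min (fun V : Mat N M => G (gram V)) U)
  (hrank : rank_deficient U) :
  global_min_psd G (gram U).
Proof.
case: hdiff => DG [D2G hD].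
set X := gram U.
have sX : sym X := gram_sym U.
case: (hD X sX) => lA [_ [hd _]].
set A := DG X.
case: hloc => delta [d0 hloc].
case: hrank => z [[k0 hk0] hz].
set c := rsum (fun k => z k * z k).
have c0 : 0 < c.
  have h1 := @rsum_ge_term _ (fun k => z k * z k) k0 (fun k => Rle_0_sqr (z k)).
  have h2 := Rlt_0_sqr (z k0) hk0; rewrite /Rsqr in h2.
  rewrite /c; simpl in h1; lra.
have nU := mnorm_ge0 U.
have stepA : forall v : 'I_N -> R, 0 <= A (fun i j => v i * v j).
  move=> v; apply: (key (G := G) (X := X)) => //; first by move=> i j; ring.
  move=> d dpos.
  set W0 : Mat N M := fun i k => v i * z k.
  have nW := mnorm_ge0 W0.
  have [t [t0 [t1 [t2 t3]]]] : exists t, 0 < t /\ t <= 1 /\ t <= delta / (2 * (mnorm W0 + 1)) /\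
        t <= d / (2 * (c + 1)).
    by apply: pick3; [lra | apply: Rdiv_lt_0_compat; lra | apply: Rdiv_lt_0_compat; lra].
  have t2' := le_div (ltac:(lra) : 0 < 2 * (mnorm W0 + 1)) t2.
  have t3' := le_div (ltac:(lra) : 0 < 2 * (c + 1)) t3.
  exists (t * t * c); split.
    have h1 : t * t <= t * 1 by apply: Rmult_le_compat_l; lra.
    have h2 : t * t * c <= t * c by apply: Rmult_le_compat_r; lra.
    split; [by apply: Rmult_lt_0_compat; [apply: Rmult_lt_0_compat|]; lra | nra].
  set V : Mat N M := fun i k => U i k + t * (v i * z k).
  have hV : mnorm (msub V U) < delta.
    have -> : msub V U = mscale t W0.
      apply functional_extensionality => i; apply functional_extensionality => k.
      rewrite /msub /mscale /V /W0; ring.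
    rewrite mnorm_scale Rabs_pos_eq; nra.
  have -> : madd X (mscale (t * t * c) (fun i j => v i * v j)) = gram V.
    apply functional_extensionality => i; apply functional_extensionality => j.
    rewrite /madd /mscale /X /gram /V.
    symmetry.
    transitivity (rsum (fun k => (U i k * U j k + (t * v j) * (U i k * z k)) +
        ((t * v i) * (U j k * z k) + (t * t * (v i * v j)) * (z k * z k)))).
      by apply: rsum_ext => k; ring.
    rewrite !rsum_add !rsum_scal (hz i) (hz j) -/c; ring.
  exact: hloc.
have stepB : 0 <= A (mscale (-1) X).
  apply: (key (G := G) (X := X)) => //; first by move=> i j; rewrite /mscale sX.
  move=> d dpos.
  have [t [t0 [t1 [t2 t3]]]] : exists t, 0 < t /\ t <= 1/2 /\ t <= delta / (2 * (mnorm U + 1)) /\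
        t <= d / 4.
    by apply: pick3; [lra | apply: Rdiv_lt_0_compat; lra | lra].
  have t2' := le_div (ltac:(lra) : 0 < 2 * (mnorm U + 1)) t2.
  exists (t * (2 - t)); split; first by split; nra.
  set V : Mat N M := fun i k => (1 - t) * U i k.
  have hV : mnorm (msub V U) < delta.
    have -> : msub V U = mscale (- t) U.
      apply functional_extensionality => i; apply functional_extensionality => k.
      rewrite /msub /mscale /V; ring.
    rewrite mnorm_scale Rabs_left; nra.
  have -> : madd X (mscale (t * (2 - t)) (mscale (-1) X)) = gram V.
    apply functional_extensionality => i; apply functional_extensionality => j.
    rewrite /madd /mscale /X /gram /V.
    symmetry.
    transitivity (rsum (fun k => ((1 - t) * (1 - t)) * (U i k * U j k))).
      by apply: rsum_ext => k; ring.
    rewrite rsum_scal; ring.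
  exact: hloc.
split; first exact: gram_psd.
move=> Y hY.
have sY := hY.1.
have AY : 0 <= A Y := psd_rank1 lA stepA hY.
set D := msub Y X.
have sD : sym D by move=> i j; rewrite /D /msub sY sX.
have sX' : sym (mscale (-1) X) by move=> i j; rewrite /mscale sX.
have AD : 0 <= A D.
  have -> : D = madd (mscale 1 Y) (mscale 1 (mscale (-1) X)).
    apply functional_extensionality => i; apply functional_extensionality => j.
    rewrite /D /madd /msub /mscale; ring.
  rewrite /A lA // -/A. lra.
have nD := mnorm_ge0 D.
apply: Rnot_lt_le => hlt.
set eps := (G X - G Y) / (2 * (mnorm D + 1)).
have eps0 : 0 < eps by apply: Rdiv_lt_0_compat; lra.
have e1 : eps * (2 * (mnorm D + 1)) = G X - G Y by rewrite /eps; field; lra.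
case: (hd eps eps0) => d [dpos hd'].
have [t [t0 [t1 [t2 _]]]] : exists t, 0 < t /\ t <= 1 /\ t <= d / (2 * (mnorm D + 1)) /\ t <= 1.
  by apply: pick3; [lra | apply: Rdiv_lt_0_compat; lra | lra].
have t2' := le_div (ltac:(lra) : 0 < 2 * (mnorm D + 1)) t2.
have sH : sym (mscale t D) by move=> i j; rewrite /mscale sD.
have nm : mnorm (mscale t D) = t * mnorm D by rewrite mnorm_scale Rabs_pos_eq; lra.
have := hd' _ sH; rewrite nm lin_scale // => /(_ ltac:(nra)) /abs_bounds hb.
have hc := hconv Y X sY sX t (conj (Rlt_le _ _ t0) t1).
have ee : madd (mscale t Y) (mscale (1 - t) X) = madd X (mscale t D).
  apply functional_extensionality => i; apply functional_extensionality => j.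
  rewrite /D /madd /msub /mscale; ring.
rewrite ee in hc.
have h3 : eps * mnorm D < G X - G Y by nra.
have h4 : 0 <= t * DG X D by apply: Rmult_le_pos; [lra | exact: AD].
have h5 : t * (G Y - G X + eps * mnorm D) < 0 by apply: Rmult_pos_neg; lra.
nra.
Qed.
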